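(* Let $K$ be a knot admitting a non-trivial coloring by some quandle $X$, and let $D$ be a diagram of $K$. Then the $1$-tangle obtained by cutting any one arc of $D$ at a single point (not at a crossing) is persistent: every knot that has a diagram containing this $1$-tangle is non-trivial.
   Context: A knot is a $1$-component link in $S^3$. A coloring of a knot $K$ by a quandle $X$ is a quandle homomorphism from the fundamental quandle of $K$ to $X$; it is non-trivial if its image has more than one element. Diagrammatically, an $X$-coloring of an oriented diagram assigns an element of $X$ to each arc so that at each crossing with over-arc colored $a$ and incoming under-arc colored $b$, the outgoing under-arc is colored $b\ast a$ (or $b\,\bar{\ast}\, a$ depending on the crossing sign); it is non-trivial if more than one color is used. A tangle ($1$-tangle, resp. $2$-tangle) is an embedding of one (resp. two) arc(s) in a $3$-ball with the endpoints fixed on the boundary sphere, up to ambient isotopy fixing the endpoints; diagrammatically, a piece of knot diagram in a disc with endpoints on the boundary circle, up to Reidemeister moves inside the disc fixing the endpoints. A knot diagram contains a tangle $T$ if there is a disc in the plane whose intersection with the diagram is a diagram of $T$. A tangle $T$ is persistent if every knot admitting a diagram that contains $T$ is non-trivial. *)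

(* Defs.v *)
(* Knot diagrams are encoded combinatorially as planar Morse ("sliced")
   diagrams; knot equivalence is Reidemeister equivalence (Reidemeister /
   Turaev theorems). *)
From mathcomp Require Import all_boot.
From Stdlib Require Import Relations.
From Stdlib Require List.
Set Implicit Arguments. Unset Strict Implicit. Unset Printing Implicit Defensive.

Record quandle := Quandle {
  qT :> Type;
  qop : qT -> qT -> qT;
  qidem : forall x, qop x x = x;
  qbij : forall y, bijective (fun x => qop x y);
  qdist : forall x y z, qop (qop x y) z = qop (qop x z) (qop y z)
}.

(** * Oriented planar diagrams in Morse position
   A diagram is read bottom to top as a list of slices.  At each height the
   diagram meets a horizontal line in finitely many points, recorded by their
   orientations (true = strand oriented upwards).  A slice [(k, e)] applies the
   elementary piece [e] to the strands at positions k, k+1, ... and is the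
   identity on the other strands:
   - [Cup o]   : a local minimum creating two new strands at positions k, k+1
                 with orientations (o, ~~o);
   - [Cap]     : a local maximum joining strands k and k+1 (which must have
                 opposite orientations);
   - [Cross b] : a crossing exchanging strands k and k+1; [b = true] means the
                 strand coming from the bottom-left (going to the top-right)
                 is the over-strand. *)
Inductive elem := Cup of bool | Cap | Cross of bool.
Definition slice := (nat * elem)%type.
Definition word := seq slice.

Definition ein (e : elem) : nat := match e with Cup _ => 0 | _ => 2 end.
Definition eout (e : elem) : nat := match e with Cap => 0 | _ => 2 end.

Definition step_or (st : seq bool) (x : slice) : option (seq bool) :=
  let: (k, e) := x in
  if k + ein e <= size st then
    let l := take k st in
    let r := drop (k + ein e) st in
    match e with
    | Cup o => Some (l ++ [:: o; ~~ o] ++ r)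
    | Cap => if nth false st k != nth false st k.+1 then Some (l ++ r) else None
    | Cross _ => Some (l ++ [:: nth false st k.+1; nth false st k] ++ r)
    end
  else None.

Fixpoint run (st : seq bool) (w : word) : option (seq bool) :=
  match w with
  | [::] => Some st
  | x :: w' => if step_or st x is Some st' then run st' w' else None
  end.

Definition valid (a : seq bool) (w : word) (b : seq bool) : Prop := run a w = Some b.

Definition shift (n : nat) (w : word) : word := [seq (n + x.1, x.2) | x <- w].

(** Number of closed components of a diagram (boundary strands get distinct
    labels; a cap joining two ends with the same label closes a component). *)
Fixpoint comp_aux (ls : seq nat) (fresh : nat) (w : word) : nat :=
  match w with
  | [::] => 0
  | (k, e) :: w' =>
    match e with
    | Cup _ => comp_aux (take k ls ++ [:: fresh; fresh] ++ drop k ls) fresh.+1 w'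
    | Cap =>
      let a := nth 0 ls k in let b := nth 0 ls k.+1 in
      let ls' := take k ls ++ drop k.+2 ls in
      if a == b then (comp_aux ls' fresh w').+1
      else comp_aux [seq (if l == b then a else l) | l <- ls'] fresh w'
    | Cross _ => comp_aux (take k ls ++ [:: nth 0 ls k.+1; nth 0 ls k] ++ drop k.+2 ls) fresh w'
    end
  end.

Definition closed_comps (a : seq bool) (w : word) : nat :=
  comp_aux (iota 0 (size a)) (size a) w.

Definition knot_diagram (D : word) : Prop :=
  valid [::] D [::] /\ closed_comps [::] D = 1.

Definition one_tangle (e : bool) (t : word) : Prop :=
  valid [:: e] t [:: e] /\ closed_comps [:: e] t = 0.

Inductive move : word -> word -> Prop :=
| mv_far k1 e1 k2 e2 : k1 + eout e1 <= k2 ->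
    move [:: (k1, e1); (k2, e2)] [:: (k2 - eout e1 + ein e1, e2); (k1, e1)]
| mv_snake1 k o : move [:: (k, Cup o); (k.+1, Cap)] [::]
| mv_snake2 k o : move [:: (k.+1, Cup o); (k, Cap)] [::]
| mv_cap_slide k b : move [:: (k, Cross b); (k.+1, Cap)] [:: (k.+1, Cross (~~ b)); (k, Cap)]
| mv_cup_slide k o b : move [:: (k, Cup o); (k.+1, Cross b)] [:: (k.+1, Cup o); (k, Cross (~~ b))]
| mv_R1a k o b : move [:: (k.+1, Cup o); (k, Cross b); (k.+1, Cap)] [::]
| mv_R1b k o b : move [:: (k, Cup o); (k.+1, Cross b); (k, Cap)] [::]
| mv_R2 k b : move [:: (k, Cross b); (k, Cross (~~ b))] [::]
  (* Reidemeister III (over/under data consistent with a height order) *)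
| mv_R3 k b1 b2 b3 : ~~ ((b1 == b3) && (b2 != b1)) ->
    move [:: (k, Cross b1); (k.+1, Cross b2); (k, Cross b3)]
         [:: (k.+1, Cross b3); (k, Cross b2); (k.+1, Cross b1)].

Definition rstep (a b : seq bool) (w w' : word) : Prop :=
  exists p q L R, move L R /\ w = p ++ L ++ q /\ w' = p ++ R ++ q /\
                  valid a w b /\ valid a w' b.

(** Equivalence of tangle diagrams with boundary [a] (bottom) and [b] (top),
    fixing the boundary; for [a = b = [::]] this is equivalence of knots. *)
Definition Equiv (a b : seq bool) : relation word :=
  clos_refl_sym_trans word (rstep a b).

Definition unknot : word := [:: (0, Cup true); (0, Cap)].

Definition nontrivial_knot (D : word) : Prop := ~ Equiv [::] [::] D unknot.

(** * Quandle colorings of diagrams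
    Colors are assigned to the points of each height level; over-strands keep
    their color; at a crossing with over-color [a] the under-strand's outgoing
    color is [in * a] (positive crossing) or [in *bar a] (negative crossing),
    the latter written as [out * a = in]. *)
Definition under_rule (X : quandle) (pos ou : bool) (a bot top : X) : Prop :=
  if ou then (if pos then top = qop bot a else qop top a = bot)
  else (if pos then bot = qop top a else qop bot a = top).

Definition slice_col (X : quandle) (st : seq bool) (c : seq X) (x : slice) (c' : seq X) : Prop :=
  let: (k, e) := x in
  let l := take k c in
  match e with
  | Cup _ => exists y, c' = l ++ [:: y; y] ++ drop k c
  | Cap => match drop k c with y :: z :: r => y = z /\ c' = l ++ r | _ => False end
  | Cross b =>
    match drop k c, drop k st with
    | xL :: xR :: r, oL :: oR :: _ =>
      let pos := (b == (oL == oR)) in   (* crossing sign is positive *)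
      if b then exists y, c' = l ++ [:: y; xL] ++ r /\ @under_rule X pos oR xL xR y
      else exists y, c' = l ++ [:: xR; y] ++ r /\ @under_rule X pos oL xR xL y
    | _, _ => False
    end
  end.

Fixpoint col_ok (X : quandle) (st : seq bool) (c : seq X) (w : word) (cs : seq (seq X)) : Prop :=
  match w, cs with
  | [::], [::] => True
  | x :: w', c' :: cs' =>
      size c = size st /\
      exists st', step_or st x = Some st' /\ @slice_col X st c x c' /\ @col_ok X st' c' w' cs'
  | _, _ => False
  end.

Definition nontriv_colored (X : quandle) (D : word) : Prop :=
  exists cs : seq (seq X), @col_ok X [::] [::] D cs /\
    exists x y : X, x <> y /\ List.In x (flatten cs) /\ List.In y (flatten cs).

(** Closing a 1-tangle [t] (entering at the bottom with orientation [e]) with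
    another 1-tangle [s] placed in the complementary disc. *)
Definition closure (e : bool) (t s : word) : word :=
  (0, Cup e) :: t ++ shift 1 s ++ [:: (0, Cap)].

(** A 1-tangle (given by a diagram [t]) is persistent if every knot having a
    diagram containing (some diagram of) it is non-trivial. *)
Definition persistent (e : bool) (t : word) : Prop :=
  forall t', Equiv [:: e] [:: e] t t' ->
  forall s, one_tangle (~~ e) s -> nontrivial_knot (closure e t' s).

Definition level_or (D : word) (j : nat) : bool :=
  head false (odflt [::] (run [::] (take j D))).

(** The 1-tangle obtained by cutting [D] at a point of the leftmost strand at
    level [j]: the lower half of the cut strand is joined (by a maximum on the
    far left) to a new bottom endpoint, the upper half (by a minimum on the far
    left) to a new top endpoint.  Its orientation is [~~ level_or D j]. *)
Definition cut (D : word) (j : nat) : word :=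
  shift 1 (take j D) ++ [:: (0, Cap); (0, Cup (~~ level_or D j))] ++ shift 1 (drop j D).

(* Main.v *)
Require Import Defs.
From mathcomp Require Import all_boot.
From Stdlib Require Import Relations Classical IndefiniteDescription.
From Stdlib Require List.
From mathcomp Require Import zify.
Set Implicit Arguments. Unset Strict Implicit. Unset Printing Implicit Defensive.


Section Q.
Variable X : quandle.

Lemma qinv_ex (y : X) : {g : X -> X | cancel (fun x => qop x y) g /\ cancel g (fun x => qop x y)}.
Proof.
apply: constructive_indefinite_description.
by case: (qbij y) => g h1 h2; exists g.
Qed.

Definition qinv (x y : X) : X := proj1_sig (qinv_ex y) x.
Lemma qinvK (x y : X) : qinv (qop x y) y = x.
Proof. by rewrite /qinv; case: (qinv_ex y) => g [h1 h2]. Qed.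
Lemma qopK (x y : X) : qop (qinv x y) y = x.
Proof. by rewrite /qinv; case: (qinv_ex y) => g [h1 h2]. Qed.
Lemma qop_inj (y : X) : injective (fun x => qop x y).
Proof. by move=> a b /= H; rewrite -(qinvK a y) H qinvK. Qed.

Definition qapp (s : bool) (x y : X) : X := if s then qop x y else qinv x y.

Lemma qapp_inv s (x y : X) : qapp (~~ s) (qapp s x y) y = x.
Proof. by case: s; rewrite /= ?qinvK ?qopK. Qed.
Lemma qapp_inv' s (x y : X) : qapp s (qapp (~~ s) x y) y = x.
Proof. by case: s; rewrite /= ?qinvK ?qopK. Qed.
Lemma qapp_idem s (x : X) : qapp s x x = x.
Proof. case: s => /=; first exact: qidem. by rewrite -{1}(qidem x) qinvK. Qed.
Lemma qapp_inj s (y : X) : injective (fun x => qapp s x y).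
Proof. by move=> a b /= H; rewrite -(qapp_inv s a y) H qapp_inv. Qed.
Lemma qapp_eq s (x y z : X) : (qapp s x y = z) <-> (x = qapp (~~ s) z y).
Proof. split=> [<-|->]; by rewrite ?qapp_inv ?qapp_inv'. Qed.

Lemma qapp_dist s t (x y z : X) : qapp s (qapp t x y) z = qapp t (qapp s x z) (qapp s y z).
Proof.
case: s; case: t => /=.
- exact: qdist.
- apply: (@qop_inj (qop y z)) => /=. by rewrite qopK -qdist qopK.
- apply: (@qop_inj z) => /=. by rewrite qopK qdist !qopK.
- apply: (@qop_inj z) => /=. rewrite qopK.
  apply: (@qop_inj y) => /=. rewrite qopK.
  rewrite -{2}(qopK y z) -qdist qopK qopK //.
Qed.

Definition under_iff pos ou (a bot top : X) :
  under_rule pos ou a bot top <-> top = qapp (ou == pos) bot a.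
Proof.
rewrite /under_rule; case: ou; case: pos => /=; split => // H.
- by rewrite -H qinvK.
- by rewrite H qopK.
- by rewrite H qinvK.
- by rewrite H qopK.
Qed.

End Q.

Lemma take_sh (T : Type) n k (l s : seq T) : size l = n -> take (n + k) (l ++ s) = l ++ take k s.
Proof. by move=> H; rewrite takeD take_size_cat // drop_size_cat. Qed.
Lemma drop_sh (T : Type) n k (l s : seq T) : size l = n -> drop (n + k) (l ++ s) = drop k s.
Proof. by move=> H; rewrite addnC -drop_drop drop_size_cat. Qed.
Lemma nth_sh (T : Type) d n k (l s : seq T) : size l = n -> nth d (l ++ s) (n + k) = nth d s k.
Proof. move=> H; rewrite nth_cat H ifF; last lia. by rewrite addKn. Qed.

Lemma step_shift sl st k e : step_or (sl ++ st) (size sl + k, e) = omap (cat sl) (step_or st (k, e)).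
Proof.
rewrite /step_or size_cat -addnA leq_add2l.
case: ifP => // _.
rewrite take_sh // drop_sh // !nth_sh // -addnS nth_sh //.
case: e => [o||b] //=; first by rewrite catA.
case: ifP => //= _; by rewrite catA.
by rewrite catA.
Qed.

Section C.
Variable X : quandle.

Definition cross_out (b oL oR : bool) (xL xR : X) : seq X :=
  if b then [:: qapp oL xR xL; xL] else [:: xR; qapp (~~ oR) xL xR].

Lemma col_cross st (c : seq X) k b c' : slice_col st c (k, Cross b) c' <->
  match drop k c, drop k st with
  | xL :: xR :: r, oL :: oR :: _ => c' = take k c ++ cross_out b oL oR xL xR ++ r
  | _, _ => False end.
Proof.
rewrite /slice_col; case: (drop k c) => [|xL [|xR r]] //; case: (drop k st) => [|oL [|oR s]] //.
case: b; rewrite /cross_out; split.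
- by case=> y [-> /under_iff ->]; case: oL; case: oR.
- move=> ->; eexists; split; first reflexivity; apply/under_iff; by case: oL; case: oR.
- by case=> y [-> /under_iff ->]; case: oL; case: oR.
- move=> ->; eexists; split; first reflexivity; apply/under_iff; by case: oL; case: oR.
Qed.

Lemma step_size st (c : seq X) x st' c' : size c = size st -> step_or st x = Some st' ->
  slice_col st c x c' -> size c' = size st'.
Proof.
case: x => k e Hs; rewrite /step_or; case: ifP => // Hk.
case: e Hk => [o|| b] Hk.
- case=> <- [y ->]; rewrite !size_cat /= !size_take !size_drop Hs addn0; lia.
- case: ifP => // _ [<-] /=.
  case E: (drop k c) => [|y [|z r]] // [_ ->].
  have := congr1 size E; rewrite !size_cat !size_take !size_drop /= Hs => Hr; lia.
- case=> <- /col_cross.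
  case E: (drop k c) => [|y [|z r]] //; case E2: (drop k st) => [|oL [|oR s]] // ->.
  have := congr1 size E; rewrite !size_cat !size_take !size_drop /= Hs => Hr.
  rewrite /cross_out; case: b Hk => Hk /=; rewrite ?size_drop /= in Hk *; lia.
Qed.


Lemma col_ok_nil st (c : seq X) cs : col_ok st c [::] cs <-> cs = [::].
Proof. by case: cs. Qed.

Lemma col_ok_cons st (c : seq X) x w cs : col_ok st c (x :: w) cs <->
  exists c' cs', cs = c' :: cs' /\ size c = size st /\
   exists st', step_or st x = Some st' /\ slice_col st c x c' /\ col_ok st' c' w cs'.
Proof.
case: cs => [|c' cs] /=; first by split=> // -[c' [cs' [H _]]].
split; first by move=> H; exists c', cs.
by case=> c'' [cs' [[<- <-] H]].
Qed.

Lemma col_ok_run st (c : seq X) w cs : col_ok st c w cs -> exists st', run st w = Some st'.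
Proof.
elim: w st c cs => [|x w IH] st c cs; first by exists st.
move/col_ok_cons=> [c' [cs' [_ [_ [st' [E [_ H]]]]]]] /=; rewrite E; exact: IH H.
Qed.

Lemma col_size st (c : seq X) w cs st' : col_ok st c w cs -> size c = size st ->
  run st w = Some st' -> size (last c cs) = size st'.
Proof.
elim: w st c cs => [|x w IH] st c cs.
  by move/col_ok_nil=> -> Hs [<-].
move/col_ok_cons=> [c' [cs' [-> [Hs [s1 [E [Hc H]]]]]]] _ /=; rewrite E => Hr.
apply: IH H _ Hr; exact: step_size Hs E Hc.
Qed.

Lemma run_cat st w1 w2 : run st (w1 ++ w2) = obind (fun s => run s w2) (run st w1).
Proof.
elim: w1 st => [|x w IH] st //=; case: (step_or st x) => //.
Qed.

Lemma col_ok_cat st (c : seq X) w1 w2 cs : col_ok st c (w1 ++ w2) cs <->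
  exists cs1 cs2 st1, cs = cs1 ++ cs2 /\ col_ok st c w1 cs1 /\ run st w1 = Some st1 /\
    col_ok st1 (last c cs1) w2 cs2.
Proof.
elim: w1 st c cs => [|x w IH] st c cs.
  split; first by move=> H; exists [::], cs, st.
  case=> cs1 [cs2 [st1 [-> [H1 [R H2]]]]]; case: cs1 H1 H2 => // _ H2; by case: R => ->.
rewrite cat_cons.
split.
- move/col_ok_cons=> [c' [cs' [-> [Hs [s1 [E [Hc /IH [cs1 [cs2 [st1 [-> [H1 [R H2]]]]]]]]]]]]].
  exists (c' :: cs1), cs2, st1; split => //; split; first by apply/col_ok_cons; exists c', cs1; split=> //; split => //; exists s1.
  by rewrite /= E R.
- case=> cs1 [cs2 [st1 [-> [/col_ok_cons [c' [cs' [-> [Hs [s1 [E [Hc H]]]]]]] [R H2]]]]].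
  apply/col_ok_cons; exists c', (cs' ++ cs2); split => //; split => //; exists s1; split => //; split => //.
  apply/IH; exists cs', cs2, st1; split => //; split => //; split => //.
  by move: R => /=; rewrite E.
Qed.


Lemma col_shift1 sl st (cl c : seq X) k e c' : size cl = size sl ->
  slice_col (sl ++ st) (cl ++ c) (size sl + k, e) c' <->
  exists c0, c' = cl ++ c0 /\ slice_col st c (k, e) c0.
Proof.
move=> H; case: e => [o||b].
- rewrite /= take_sh // drop_sh //; split.
    by case=> y ->; exists (take k c ++ [:: y; y] ++ drop k c); split; [rewrite catA | exists y].
  by case=> c0 [-> [y ->]]; exists y; rewrite catA.
- rewrite /= take_sh // drop_sh //.
  case: (drop k c) => [|y [|z r]]; try by split => // -[c0 [_ []]].
  split; first by case=> -> ->; exists (take k c ++ r); rewrite catA.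
  by case=> c0 [-> [-> ->]]; rewrite catA.
- split.
    move/col_cross; rewrite take_sh // !drop_sh //.
    case E1: (drop k c) => [|y [|z r]] //; case E2: (drop k st) => [|oL [|oR s]] // ->.
    eexists; split; last by apply/col_cross; rewrite E1 E2; reflexivity.
    by rewrite !catA.
  case=> c0 [-> /col_cross]; move=> Hc; apply/col_cross; rewrite take_sh // !drop_sh //.
  move: Hc; case: (drop k c) => [|y [|z r]] //; case: (drop k st) => [|oL [|oR s]] // ->.
  by rewrite !catA.
Qed.

Lemma run_cons st x w : run st (x :: w) = if step_or st x is Some st' then run st' w else None.
Proof. by []. Qed.

Lemma run_shift sl st w : run (sl ++ st) (shift (size sl) w) = omap (cat sl) (run st w).
Proof.
elim: w st => [|[k e] w IH] st //.
rewrite /shift map_cons -/(shift _ _) !run_cons step_shift.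
case: (step_or st (k, e)) => //= s; exact: IH.
Qed.

Lemma col_shift sl st (cl c : seq X) w cs : size cl = size sl ->
  col_ok (sl ++ st) (cl ++ c) (shift (size sl) w) cs <->
  exists cs0, cs = map (cat cl) cs0 /\ col_ok st c w cs0.
Proof.
move=> H; elim: w st c cs => [|[k e] w IH] st c cs.
  rewrite col_ok_nil; split; first by move=> ->; exists [::].
  by case=> cs0 [-> /col_ok_nil ->].
rewrite /shift map_cons -/(shift _ _) col_ok_cons; split.
- case=> c' [cs' [-> [Hs [s1 [E [Hc Hw]]]]]].
  move: E; rewrite step_shift; case E: (step_or st (k, e)) => [s0|] //= [Es]; subst s1.
  move/col_shift1: Hc => -/(_ H) [c0 [Ec Hc]]; subst c'.
  move/IH: Hw => [cs0 [-> Hw]].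
  exists (c0 :: cs0); split; first by []. split.
    by move: Hs; rewrite !size_cat H => /eqP; rewrite eqn_add2l => /eqP.
  by exists s0.
- case=> cs0 [-> /col_ok_cons [c0 [cs1 [-> [Hs [s0 [E [Hc Hw]]]]]]]].
  exists (cl ++ c0), (map (cat cl) cs1); split => //; split; first by rewrite !size_cat H Hs.
  exists (sl ++ s0); rewrite step_shift E; split => //; split.
    by apply/col_shift1 => //; exists c0.
  by apply/IH; exists cs1.
Qed.

End C.

Inductive lmv : word -> word -> Prop :=
| l_far e1 d e2 : lmv [:: (0, e1); (eout e1 + d, e2)] [:: (ein e1 + d, e2); (0, e1)]
| l_s1 o : lmv [:: (0, Cup o); (1, Cap)] [::]
| l_s2 o : lmv [:: (1, Cup o); (0, Cap)] [::]
| l_cap b : lmv [:: (0, Cross b); (1, Cap)] [:: (1, Cross (~~ b)); (0, Cap)]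
| l_cup o b : lmv [:: (0, Cup o); (1, Cross b)] [:: (1, Cup o); (0, Cross (~~ b))]
| l_r1a o b : lmv [:: (1, Cup o); (0, Cross b); (1, Cap)] [::]
| l_r1b o b : lmv [:: (0, Cup o); (1, Cross b); (0, Cap)] [::]
| l_r2 b : lmv [:: (0, Cross b); (0, Cross (~~ b))] [::]
| l_r3 b1 b2 b3 : ~~ ((b1 == b3) && (b2 != b1)) ->
    lmv [:: (0, Cross b1); (1, Cross b2); (0, Cross b3)]
        [:: (1, Cross b3); (0, Cross b2); (1, Cross b1)].

Lemma lmv_ne L R : lmv L R -> L <> [::].
Proof. by case. Qed.

Lemma move_lmv L R : move L R -> exists k L0 R0, L = shift k L0 /\ R = shift k R0 /\ lmv L0 R0.
Proof.
case.
- move=> k1 e1 k2 e2 H; exists k1, [:: (0, e1); (eout e1 + (k2 - k1 - eout e1), e2)],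
    [:: (ein e1 + (k2 - k1 - eout e1), e2); (0, e1)]; split; last split; last exact: l_far.
  + rewrite /shift /= addn0; congr (_ :: (_, _) :: _); lia.
  + rewrite /shift /= addn0; congr ((_, _) :: _); lia.
- move=> k o; exists k, [:: (0, Cup o); (1, Cap)], [::]; rewrite /shift /= addn0 addn1; split => //; split => //; exact: l_s1.
- move=> k o; exists k, [:: (1, Cup o); (0, Cap)], [::]; rewrite /shift /= addn0 addn1; split => //; split => //; exact: l_s2.
- move=> k b; exists k, [:: (0, Cross b); (1, Cap)], [:: (1, Cross (~~ b)); (0, Cap)]; rewrite /shift /= addn0 addn1; split => //; split => //; exact: l_cap.
- move=> k o b; exists k, [:: (0, Cup o); (1, Cross b)], [:: (1, Cup o); (0, Cross (~~ b))]; rewrite /shift /= addn0 addn1; split => //; split => //; exact: l_cup.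
- move=> k o b; exists k, [:: (1, Cup o); (0, Cross b); (1, Cap)], [::]; rewrite /shift /= addn0 addn1; split => //; split => //; exact: l_r1a.
- move=> k o b; exists k, [:: (0, Cup o); (1, Cross b); (0, Cap)], [::]; rewrite /shift /= addn0 addn1; split => //; split => //; exact: l_r1b.
- move=> k b; exists k, [:: (0, Cross b); (0, Cross (~~ b))], [::]; rewrite /shift /= addn0; split => //; split => //; exact: l_r2.
- move=> k b1 b2 b3 H; exists k, [:: (0, Cross b1); (1, Cross b2); (0, Cross b3)],
    [:: (1, Cross b3); (0, Cross b2); (1, Cross b1)]; rewrite /shift /= addn0 addn1; split => //; split => //; exact: l_r3.
Qed.

Section G.
Variable X : quandle.

Definition good (L R : word) := forall st (c : seq X) cs s1 s2, size c = size st ->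
  run st L = Some s1 -> run st R = Some s2 -> col_ok st c L cs ->
  s1 = s2 /\ exists cs', col_ok st c R cs' /\ last c cs' = last c cs.

Definition allx (W : word) := forall st (c : seq X) cs s1 (x : X), size c = size st ->
  run st W = Some s1 -> col_ok st c W cs ->
  (forall z, List.In z c -> z = x) -> (forall z, List.In z (last c cs) -> z = x) ->
  forall z, List.In z (flatten cs) -> z = x.

Lemma shift_le st k W s : run st (shift k W) = Some s -> W <> [::] -> k <= size st.
Proof.
case: W => [|[k0 e] W] //; rewrite /shift map_cons run_cons /step_or /=.
case: ifP => // H _ _; lia.
Qed.

Lemma in_flatten_map (cl : seq X) cs z : List.In z (flatten (map (cat cl) cs)) ->
  List.In z cl \/ List.In z (flatten cs).
Proof.
elim: cs => [|c cs IH] //= /List.in_app_iff [/List.in_app_iff [H|H]|/IH [H|H]]; auto.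
- by right; apply/List.in_app_iff; left.
- by right; apply/List.in_app_iff; right.
Qed.

Lemma split_at T k (s : seq T) : k <= size s -> exists sl sr, s = sl ++ sr /\ size sl = k.
Proof. by move=> H; exists (take k s), (drop k s); rewrite cat_take_drop size_takel. Qed.

Lemma good_shift k L R : good L R -> (L <> [::] \/ R <> [::]) -> good (shift k L) (shift k R).
Proof.
move=> G NE st c cs s1 s2 Hs E1 E2 Hc.
have Hk : k <= size st by case: NE => NE; [apply: shift_le E1 NE | apply: shift_le E2 NE].
have [sl [sr [Est Hsl]]] := split_at Hk.
have [cl [cr [Ec Hcl]]] : exists cl cr, c = cl ++ cr /\ size cl = k by apply: split_at; rewrite Hs.
subst st c; rewrite -Hsl in E1 E2 Hc; rewrite -Hsl.
have Hcl' : size cl = size sl by rewrite Hsl.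
move: E1 E2 Hc; rewrite !run_shift.
case E1: (run sr L) => [t1|] //= [<-].
case E2: (run sr R) => [t2|] //= [<-].
move/col_shift => /(_ Hcl') [cs0 [-> H0]].
have Hs' : size cr = size sr by move: Hs; rewrite !size_cat Hcl'; lia.
have [-> [cs' [H1 H2]]] := G _ _ _ _ _ Hs' E1 E2 H0.
split => //; exists (map (cat cl) cs'); split.
  by apply/col_shift => //; exists cs'.
by rewrite !last_map H2.
Qed.

Lemma allx_shift k W : allx W -> allx (shift k W).
Proof.
move=> A st c cs s1 x Hs E1 Hc Hx1 Hx2 z Hz.
have [WE|WNE] : W = [::] \/ W <> [::] by case: (W) => [|? ?]; [left|right].
  by move: Hc Hz Hx2; rewrite WE; case: cs.
have Hk : k <= size st by apply: shift_le E1 WNE.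
have [sl [sr [Est Hsl]]] := split_at Hk.
have [cl [cr [Ec Hcl]]] : exists cl cr, c = cl ++ cr /\ size cl = k by apply: split_at; rewrite Hs.
subst st c; rewrite -Hsl in E1 Hc.
have Hcl' : size cl = size sl by rewrite Hsl.
move: E1 Hc; rewrite run_shift.
case E1: (run sr W) => [t1|] //= _.
move/col_shift => /(_ Hcl') [cs0 [Ecs H0]]; subst cs.
have Hs' : size cr = size sr by move: Hs; rewrite !size_cat Hcl'; lia.
case/in_flatten_map: Hz => Hz; first by apply: Hx1; apply/List.in_app_iff; left.
apply: (A _ _ _ _ _ Hs' E1 H0) => // z' Hz'.
- by apply: Hx1; apply/List.in_app_iff; right.
- by apply: Hx2; rewrite last_map; apply/List.in_app_iff; right.
Qed.

End G.

Lemma st_cup0 o st : step_or st (0, Cup o) = Some (o :: ~~ o :: st).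
Proof. by rewrite /step_or /= ?take0 ?addn0 ?drop0. Qed.
Lemma st_cup1 o a st : step_or (a :: st) (1, Cup o) = Some (a :: o :: ~~ o :: st).
Proof. by rewrite /step_or /= ?take0 ?addn0 ?drop0. Qed.
Lemma st_cap0 a b st : step_or (a :: b :: st) (0, Cap) = if a != b then Some st else None.
Proof. by rewrite /step_or /= ?take0 ?addn0 ?drop0. Qed.
Lemma st_cap1 a0 a b st : step_or (a0 :: a :: b :: st) (1, Cap) = if a != b then Some (a0 :: st) else None.
Proof. by rewrite /step_or /= ?take0 ?addn0 ?drop0. Qed.
Lemma st_cr0 x a b st : step_or (a :: b :: st) (0, Cross x) = Some (b :: a :: st).
Proof. by rewrite /step_or /= ?take0 ?addn0 ?drop0. Qed.
Lemma st_cr1 x a0 a b st : step_or (a0 :: a :: b :: st) (1, Cross x) = Some (a0 :: b :: a :: st).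
Proof. by rewrite /step_or /= ?take0 ?addn0 ?drop0. Qed.

Lemma test1 b : step_or [::] (0, Cross b) = None.
Proof. by []. Qed.
Lemma test2 b (s : seq bool) : step_or [:: true] (0, Cross b) = Some s -> False.
Proof. by []. Qed.

Section H.
Variable X : quandle.

Lemma sc_cup0 st (c : seq X) o c' : slice_col st c (0, Cup o) c' <-> exists y, c' = y :: y :: c.
Proof. by rewrite /= ?take0 ?drop0. Qed.
Lemma sc_cup1 st (x : X) c o c' : slice_col st (x :: c) (1, Cup o) c' <-> exists y, c' = x :: y :: y :: c.
Proof. by rewrite /= ?take0 ?drop0. Qed.
Lemma sc_cap0 st (x1 x2 : X) c c' : slice_col st (x1 :: x2 :: c) (0, Cap) c' <-> x1 = x2 /\ c' = c.
Proof. by []. Qed.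
Lemma sc_cap1 st (x0 x1 x2 : X) c c' : slice_col st (x0 :: x1 :: x2 :: c) (1, Cap) c' <-> x1 = x2 /\ c' = x0 :: c.
Proof. by rewrite /= ?take0. Qed.
Lemma sc_cr0 o1 o2 st (x1 x2 : X) c b c' : slice_col (o1 :: o2 :: st) (x1 :: x2 :: c) (0, Cross b) c' <->
  c' = cross_out b o1 o2 x1 x2 ++ c.
Proof. by rewrite col_cross. Qed.
Lemma sc_cr1 o0 o1 o2 st (x0 x1 x2 : X) c b c' : slice_col (o0 :: o1 :: o2 :: st) (x0 :: x1 :: x2 :: c) (1, Cross b) c' <->
  c' = x0 :: cross_out b o1 o2 x1 x2 ++ c.
Proof. by rewrite col_cross /= ?take0. Qed.

Lemma colE st (c : seq X) x w cs st' : step_or st x = Some st' ->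
  col_ok st c (x :: w) cs <-> exists c' cs', cs = c' :: cs' /\ size c = size st /\ slice_col st c x c' /\ col_ok st' c' w cs'.
Proof.
move=> E; rewrite col_ok_cons; split.
  by case=> c' [cs' [-> [Hs [s [E' [H1 H2]]]]]]; move: E'; rewrite E => -[->]; exists c', cs'.
by case=> c' [cs' [-> [Hs [H1 H2]]]]; exists c', cs'; split => //; split => //; exists st'.
Qed.

End H.

Ltac stepE := first [ exact: st_cup0 | exact: st_cup1 | (rewrite st_cap0 /=; reflexivity)
  | (rewrite st_cap1 /=; reflexivity) | exact: st_cr0 | exact: st_cr1 ].

Ltac fwd Hc :=
  eapply colE in Hc; [ | stepE ];
  let c' := fresh "c" in let cs' := fresh "cs" in let Hsc := fresh "Hsc" in
  case: Hc => c' [cs' [-> [_ [Hsc Hc]]]];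
  first [ move/sc_cr0: Hsc => Hsc | move/sc_cr1: Hsc => Hsc | move/sc_cap0: Hsc => [? Hsc]
        | move/sc_cap1: Hsc => [? Hsc] | move/sc_cup0: Hsc => [? Hsc] | move/sc_cup1: Hsc => [? Hsc] ];
  subst c'.

Ltac fwdall Hc := repeat fwd Hc;
  match type of Hc with col_ok _ _ [::] ?cs => case: cs Hc => // _ end.

Ltac sc_build := first [ apply/sc_cr0; reflexivity | apply/sc_cr1; reflexivity
  | apply/sc_cap0; split; [ | reflexivity ] | apply/sc_cap1; split; [ | reflexivity ]
  | apply/sc_cup0; eexists; reflexivity | apply/sc_cup1; eexists; reflexivity ].

Ltac bwd1 := apply/colE; [stepE | do 2 eexists; split; [reflexivity | split; [simpl; lia | split; [ sc_build | ] ] ] ].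
Ltac bwdall := repeat bwd1; try (apply/col_ok_nil; reflexivity).

Ltac runE H := revert H; rewrite /= ?take0 ?drop0 ?addn0 ?add0n /=.


Lemma qinv_idem (X : quandle) (x : X) : qinv x x = x.
Proof. exact: (qapp_idem false). Qed.
Ltac conseq := repeat match goal with |- _ :: _ = _ :: _ => apply: (f_equal2 (@cons _)) end.
Ltac qsimp := rewrite ?qapp_inv ?qapp_inv' ?qapp_idem ?qinvK ?qopK ?qidem ?qinv_idem.
Lemma qapp_fix (X : quandle) s (x y : X) : qapp s x y = y -> x = y.
Proof. by rewrite -{2}(qapp_idem s y) => /qapp_inj. Qed.
Lemma qapp_fix' (X : quandle) s (x y : X) : y = qapp s x y -> x = y.
Proof. by move/esym/qapp_fix. Qed.
Ltac fixes := repeat match goal with H : qapp _ _ ?b = ?b |- _ => apply qapp_fix in H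
  | H : ?b = qapp _ _ ?b |- _ => apply qapp_fix' in H end.
Lemma qd2 (X : quandle) (x y z : X) : qinv (qop x y) z = qop (qinv x z) (qinv y z).
Proof. exact: (qapp_dist false true). Qed.
Lemma qd3 (X : quandle) (x y z : X) : qop (qinv x y) z = qinv (qop x z) (qop y z).
Proof. exact: (qapp_dist true false). Qed.
Lemma qd4 (X : quandle) (x y z : X) : qinv (qinv x y) z = qinv (qinv x z) (qinv y z).
Proof. exact: (qapp_dist false false). Qed.
Ltac dist1 D := first [ (rewrite D; qsimp; done) | (apply/esym; rewrite D; qsimp; done) ].
Ltac dist := first [ dist1 qdist | dist1 qd2 | dist1 qd3 | dist1 qd4 ].
Ltac closer := fixes; try subst; rewrite /cross_out /=; conseq; try reflexivity; qsimp; try done; try dist.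

Ltac fin := eexists; split; [bwdall | idtac]; closer.

Ltac goodtac :=
  let st := fresh "st" in let c := fresh "c" in let cs := fresh "cs" in
  let s1 := fresh "s1" in let s2 := fresh "s2" in let Hs := fresh "Hs" in
  let E1 := fresh "E1" in let E2 := fresh "E2" in let Hc := fresh "Hc" in
  move=> st c cs s1 s2 Hs E1 E2 Hc;
  case: st Hs E1 E2 Hc => [|o1 [|o2 [|o3 st]]] Hs E1 E2 Hc;
  case: c Hs Hc => [|x1 [|x2 [|x3 c]]] Hs Hc; simpl in Hs; try discriminate;
  repeat match goal with bb : bool |- _ => destruct bb end;
  rewrite /= ?take0 ?drop0 ?addn0 ?add0n /= in E1 E2; try discriminate;
  case: E1 => <-; case: E2 => <-; split => //;
  fwdall Hc; fin.

Section T.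
Variable X : quandle.

Lemma g_r2 b : good X [:: (0, Cross b); (0, Cross (~~ b))] [::].
Proof. goodtac. Qed.
Lemma g_r2' b : good X [::] [:: (0, Cross b); (0, Cross (~~ b))].
Proof. goodtac. Qed.

Lemma g_s1 o : good X [:: (0, Cup o); (1, Cap)] [::].
Proof. goodtac. Qed.
Lemma g_s1' o : good X [::] [:: (0, Cup o); (1, Cap)].
Proof. goodtac. Qed.
Lemma g_s2 o : good X [:: (1, Cup o); (0, Cap)] [::].
Proof. goodtac. Qed.
Lemma g_s2' o : good X [::] [:: (1, Cup o); (0, Cap)].
Proof. goodtac. Qed.
Lemma g_cap b : good X [:: (0, Cross b); (1, Cap)] [:: (1, Cross (~~ b)); (0, Cap)].
Proof. goodtac. Qed.
Lemma g_cap' b : good X [:: (1, Cross (~~ b)); (0, Cap)] [:: (0, Cross b); (1, Cap)].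
Proof. goodtac. Qed.
Lemma g_cup o b : good X [:: (0, Cup o); (1, Cross b)] [:: (1, Cup o); (0, Cross (~~ b))].
Proof. goodtac. Qed.
Lemma g_cup' o b : good X [:: (1, Cup o); (0, Cross (~~ b))] [:: (0, Cup o); (1, Cross b)].
Proof. goodtac. Qed.
Lemma g_r1a o b : good X [:: (1, Cup o); (0, Cross b); (1, Cap)] [::].
Proof. goodtac. Qed.
Lemma g_r1a' o b : good X [::] [:: (1, Cup o); (0, Cross b); (1, Cap)].
Proof. goodtac. Qed.
Lemma g_r1b o b : good X [:: (0, Cup o); (1, Cross b); (0, Cap)] [::].
Proof. goodtac. Qed.
Lemma g_r1b' o b : good X [::] [:: (0, Cup o); (1, Cross b); (0, Cap)].
Proof. goodtac. Qed.

Lemma g_r3 b1 b2 b3 : ~~ ((b1 == b3) && (b2 != b1)) -> good X [:: (0, Cross b1); (1, Cross b2); (0, Cross b3)]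
        [:: (1, Cross b3); (0, Cross b2); (1, Cross b1)].
Proof. case: b1; case: b2; case: b3 => H; try discriminate H.
all: goodtac. Qed.
Lemma g_r3' b1 b2 b3 : ~~ ((b1 == b3) && (b2 != b1)) -> good X [:: (1, Cross b3); (0, Cross b2); (1, Cross b1)] [:: (0, Cross b1); (1, Cross b2); (0, Cross b3)].
Proof. case: b1; case: b2; case: b3 => H; try discriminate H.
all: goodtac. Qed.
End T.

Lemma inv_cons (X : quandle) (a : X) l x : (forall z, List.In z (a :: l) -> z = x) ->
  a = x /\ (forall z, List.In z l -> z = x).
Proof. by move=> H; split; [apply: H; left | move=> z Hz; apply: H; right]. Qed.

Lemma inv_or (X : quandle) (a x : X) (P : X -> Prop) : (forall z, a = z \/ P z -> z = x) ->
  a = x /\ (forall z, P z -> z = x).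
Proof. by move=> H; split; [apply: H; left | move=> z Hz; apply: H; right]. Qed.
Ltac invH H := repeat (let E := fresh "E" in first [case/inv_cons: H => E H | case/inv_or: H => E H]).

Lemma In_flat_cons (X : quandle) (z : X) a l : List.In z (flatten (a :: l)) -> List.In z a \/ List.In z (flatten l).
Proof. by move/List.in_app_iff. Qed.

Lemma In_cat (T : Type) (z : T) s1 s2 : List.In z (s1 ++ s2) -> List.In z s1 \/ List.In z s2.
Proof. elim: s1 => [|a s IH] /=; auto. by case=> [->|/IH [H|H]]; auto. Qed.

Ltac inz := repeat match goal with
 | H : List.In _ (flatten (_ :: _)) |- _ => case/In_flat_cons: H => H
 | H : List.In _ (flatten [::]) |- _ => case: H
 | H : List.In _ (cat _ _) |- _ => let H' := fresh in case: (In_cat H) => H'; clear H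
 | H : List.In _ (if _ then _ else _) |- _ => simpl in H
 | H : List.In _ (_ :: _) |- _ => case: H => H
 | H : List.In _ [::] |- _ => case: H
 | H : _ \/ _ |- _ => case: H => H
 | H : False |- _ => case: H
 end.

Ltac allxtac :=
  let st := fresh "st" in let c := fresh "c" in let cs := fresh "cs" in
  let s1 := fresh "s1" in let x := fresh "x" in let Hs := fresh "Hs" in
  let E1 := fresh "E1" in let Hc := fresh "Hc" in let Hx1 := fresh "Hx1" in
  let Hx2 := fresh "Hx2" in let z := fresh "z" in let Hz := fresh "Hz" in
  move=> st c cs s1 x Hs E1 Hc Hx1 Hx2 z Hz;
  case: st Hs E1 Hc => [|o1 [|o2 [|o3 st]]] Hs E1 Hc;
  case: c Hs Hc Hx1 Hx2 => [|x1 [|x2 [|x3 c]]] Hs Hc Hx1 Hx2; simpl in Hs; try discriminate;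
  repeat match goal with bb : bool |- _ => destruct bb end;
  rewrite /= ?take0 ?drop0 ?addn0 ?add0n /= in E1; try discriminate;
  revert Hx2 Hz; fwdall Hc; move=> Hx2 Hz; rewrite /cross_out /= in Hx2; rewrite /cross_out in Hz;
  invH Hx1; invH Hx2; fixes; subst; inz; subst; qsimp; try done; try (by apply: Hx1).

Section T2.
Variable X : quandle.
Lemma a_s1 o : allx X [:: (0, Cup o); (1, Cap)]. Proof. allxtac. Qed.
Lemma a_s2 o : allx X [:: (1, Cup o); (0, Cap)]. Proof. allxtac. Qed.
Lemma a_cap b : allx X [:: (0, Cross b); (1, Cap)]. Proof. allxtac. Qed.
Lemma a_cap' b : allx X [:: (1, Cross (~~ b)); (0, Cap)]. Proof. allxtac. Qed.
Lemma a_cup o b : allx X [:: (0, Cup o); (1, Cross b)]. Proof. allxtac. Qed.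
Lemma a_cup' o b : allx X [:: (1, Cup o); (0, Cross (~~ b))]. Proof. allxtac. Qed.
Lemma a_r1a o b : allx X [:: (1, Cup o); (0, Cross b); (1, Cap)]. Proof. allxtac. Qed.
Lemma a_r1b o b : allx X [:: (0, Cup o); (1, Cross b); (0, Cap)]. Proof. allxtac. Qed.
Lemma a_r2 b : allx X [:: (0, Cross b); (0, Cross (~~ b))]. Proof. allxtac. Qed.
Lemma a_r3 (b1 b2 b3 : bool) : allx X [:: (0, Cross b1); (1, Cross b2); (0, Cross b3)]. Proof. allxtac. Qed.
Lemma a_r3' (b1 b2 b3 : bool) : allx X [:: (1, Cross b3); (0, Cross b2); (1, Cross b1)]. Proof. allxtac. Qed.
Lemma a_nil : allx X [::]. Proof. by move=> st c [|? ?]. Qed.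
End T2.

Lemma dropl_cat T n (s1 s2 : seq T) : n <= size s1 -> drop n (s1 ++ s2) = drop n s1 ++ s2.
Proof.
move=> H; rewrite drop_cat; case: ltnP => H' //.
have E : n = size s1 by lia.
by rewrite E subnn drop0 drop_size.
Qed.

Lemma step_le st k e st' : step_or st (k, e) = Some st' -> k + ein e <= size st.
Proof. by rewrite /step_or; case: ifP. Qed.

Lemma step_right st sr k e : k + ein e <= size st ->
  step_or (st ++ sr) (k, e) = omap (cat^~ sr) (step_or st (k, e)).
Proof.
move=> H; rewrite /step_or size_cat H.
have -> : k + ein e <= size st + size sr by lia.
rewrite takel_cat ?dropl_cat; try lia.
case: e H => [o||b] H /=; first by rewrite -!catA.
- have h1 : k < size st by move: H => /=; lia.
  have h2 : k.+1 < size st by move: H => /=; lia.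
  rewrite !nth_cat h1 h2; case: ifP => //= _; by rewrite -catA.
- have h1 : k < size st by move: H => /=; lia.
  have h2 : k.+1 < size st by move: H => /=; lia.
  rewrite !nth_cat h1 h2 /=; by rewrite -!catA.
Qed.

Section R.
Variable X : quandle.

Lemma col_right st sr (c cr : seq X) k e c'' : size c = size st -> k + ein e <= size st ->
  slice_col (st ++ sr) (c ++ cr) (k, e) c'' <-> exists c', c'' = c' ++ cr /\ slice_col st c (k, e) c'.
Proof.
move=> Hs H; case: e H => [o||b] H.
- rewrite /= takel_cat ?dropl_cat; try lia.
  split; first by case=> y ->; exists (take k c ++ [:: y; y] ++ drop k c); split; [rewrite -!catA | exists y].
  by case=> c' [-> [y ->]]; exists y; rewrite -!catA.
- have Hd : 2 <= size (drop k c) by rewrite size_drop; move: H => /=; lia.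
  rewrite /= takel_cat ?dropl_cat; try lia.
  case: (drop k c) Hd => [|y [|z r]] // _ /=.
  split; first by case=> -> ->; exists (take k c ++ r); rewrite -catA.
  by case=> c' [-> [-> ->]]; rewrite -catA.
- have Hd : 2 <= size (drop k c) by rewrite size_drop; move: H => /=; lia.
  have Hd' : 2 <= size (drop k st) by rewrite size_drop; move: H => /=; lia.
  split.
    move/col_cross; rewrite takel_cat ?dropl_cat; try lia.
    case E1: (drop k c) Hd => [|y [|z r]] // _; case E2: (drop k st) Hd' => [|oL [|oR s]] // _ /= ->.
    eexists; split; last by apply/col_cross; rewrite E1 E2; reflexivity.
    by rewrite -!catA.
  case=> c' [-> /col_cross]; move=> Hc; apply/col_cross; rewrite takel_cat ?dropl_cat; try lia.
  move: Hc; case: (drop k c) Hd => [|y [|z r]] // _; case: (drop k st) Hd' => [|oL [|oR s]] // _ /= ->.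
  by rewrite -!catA.
Qed.

End R.

Lemma step_sz st k e st' : step_or st (k, e) = Some st' -> size st' + ein e = size st + eout e.
Proof.
rewrite /step_or; case: ifP => // H.
case: e H => [o||b] H /=.
- case=> <-; rewrite !size_cat /= size_takel ?size_drop; lia.
- case: ifP => // _ [<-]; rewrite !size_cat /= size_takel ?size_drop; move: H => /=; lia.
- case=> <-; rewrite !size_cat /= size_takel ?size_drop; move: H => /=; lia.
Qed.

Lemma run_some st x w st' : step_or st x = Some st' -> run st (x :: w) = run st' w.
Proof. by move=> E; rewrite run_cons E. Qed.

Section FAR.
Variable X : quandle.

Definition fdat e1 d e2 st (c : seq X) A B A' B' cA cB cA' cB' :=
  [/\ st = A ++ B, c = cA ++ cB, size A = ein e1, size cA = size A &
  [/\ size cB = size B, step_or A (0, e1) = Some A', step_or B (d, e2) = Some B',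
      slice_col A cA (0, e1) cA' & slice_col B cB (d, e2) cB']].

Lemma fdat_sizes e1 d e2 st (c : seq X) A B A' B' cA cB cA' cB' :
  fdat e1 d e2 st c A B A' B' cA cB cA' cB' ->
  [/\ size A' = eout e1, size cA' = size A' & size cB' = size B'].
Proof.
case=> _ _ HA HcA [HcB EA EB SA SB]; split.
- by have := step_sz EA; rewrite HA; lia.
- exact: step_size HcA EA SA.
- exact: step_size HcB EB SB.
Qed.

Lemma farL_run e1 d e2 st (c : seq X) A B A' B' cA cB cA' cB' :
  fdat e1 d e2 st c A B A' B' cA cB cA' cB' ->
  run st [:: (0, e1); (eout e1 + d, e2)] = Some (A' ++ B').
Proof.
move=> F; have [HA' _ _] := fdat_sizes F; case: F => -> _ HA _ [_ EA EB _ _].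
have S1 : step_or (A ++ B) (0, e1) = Some (A' ++ B) by rewrite step_right ?EA // HA.
have S2 : step_or (A' ++ B) (eout e1 + d, e2) = Some (A' ++ B') by rewrite -HA' step_shift EB.
by rewrite (run_some _ S1) (run_some _ S2).
Qed.

Lemma farR_run e1 d e2 st (c : seq X) A B A' B' cA cB cA' cB' :
  fdat e1 d e2 st c A B A' B' cA cB cA' cB' ->
  run st [:: (ein e1 + d, e2); (0, e1)] = Some (A' ++ B').
Proof.
move=> F; case: F => -> _ HA _ [_ EA EB _ _].
have S1 : step_or (A ++ B) (ein e1 + d, e2) = Some (A ++ B') by rewrite -HA step_shift EB.
have S2 : step_or (A ++ B') (0, e1) = Some (A' ++ B') by rewrite step_right ?EA // HA.
by rewrite (run_some _ S1) (run_some _ S2).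
Qed.

Lemma farL_col e1 d e2 st (c : seq X) A B A' B' cA cB cA' cB' :
  fdat e1 d e2 st c A B A' B' cA cB cA' cB' ->
  col_ok st c [:: (0, e1); (eout e1 + d, e2)] [:: cA' ++ cB; cA' ++ cB'].
Proof.
move=> F; have [HA' HcA' HcB'] := fdat_sizes F.
case: F => -> -> HA HcA [HcB EA EB SA SB].
have Hin : 0 + ein e1 <= size A by rewrite HA.
apply/col_ok_cons; exists (cA' ++ cB), [:: cA' ++ cB']; split => //; split; first by rewrite !size_cat HcA HcB.
exists (A' ++ B); split; first by rewrite step_right // EA.
split; first by apply/col_right => //; exists cA'.
apply/col_ok_cons; exists (cA' ++ cB'), [::]; split => //; split; first by rewrite !size_cat HcA' HcB.
exists (A' ++ B'); rewrite -HA' step_shift EB; split => //; split => //.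
by apply/col_shift1 => //; exists cB'.
Qed.

Lemma farR_col e1 d e2 st (c : seq X) A B A' B' cA cB cA' cB' :
  fdat e1 d e2 st c A B A' B' cA cB cA' cB' ->
  col_ok st c [:: (ein e1 + d, e2); (0, e1)] [:: cA ++ cB'; cA' ++ cB'].
Proof.
move=> F; have [HA' HcA' HcB'] := fdat_sizes F.
case: F => -> -> HA HcA [HcB EA EB SA SB].
have Hin : 0 + ein e1 <= size A by rewrite HA.
apply/col_ok_cons; exists (cA ++ cB'), [:: cA' ++ cB']; split => //; split; first by rewrite !size_cat HcA HcB.
exists (A ++ B'); rewrite -HA step_shift EB; split => //; split.
  by apply/col_shift1 => //; exists cB'.
apply/col_ok_cons; exists (cA' ++ cB'), [::]; split => //; split; first by rewrite !size_cat HcA HcB'.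
exists (A' ++ B'); split; first by rewrite step_right // EA.
split => //; by apply/col_right => //; exists cA'.
Qed.

Lemma farL_dec e1 d e2 st (c : seq X) cs : size c = size st ->
  col_ok st c [:: (0, e1); (eout e1 + d, e2)] cs ->
  exists A B A' B' cA cB cA' cB', fdat e1 d e2 st c A B A' B' cA cB cA' cB' /\
    cs = [:: cA' ++ cB; cA' ++ cB'].
Proof.
move=> Hs /col_ok_cons [c1 [cs1 [-> [_ [st1 [E1 [S1 H1]]]]]]].
have Hk := step_le E1.
have [A [B [EA HA]]] := split_at Hk.
have [cA [cB [EcA HcA]]] : exists cA cB, c = cA ++ cB /\ size cA = ein e1 by apply: split_at; rewrite Hs.
subst st c.
have HcA' : size cA = size A by rewrite HA HcA.
have HcB : size cB = size B by move: Hs; rewrite !size_cat HcA'; lia.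
move: E1; rewrite step_right; last by rewrite HA.
case EA: (step_or A (0, e1)) => [A'|] //= [E1]; subst st1.
move/col_right: S1 => /(_ HcA') []; first by rewrite HA.
move=> cA' [Ec1 SA]; subst c1.
have HA' : size A' = eout e1 by have := step_sz EA; rewrite HA; lia.
have HcA2 : size cA' = size A' by apply: step_size HcA' EA SA.
move/col_ok_cons: H1 => [c2 [cs2 [-> [_ [st2 [E2 [S2 H2]]]]]]].
move: E2 S2; rewrite -HA' step_shift.
case EB: (step_or B (d, e2)) => [B'|] //= [E2]; subst st2.
move/col_shift1 => /(_ HcA2) [cB' [Ec2 SB]]; subst c2.
case: cs2 H2 => // _.
by exists A, B, A', B', cA, cB, cA', cB'.
Qed.

Lemma farR_dec e1 d e2 st (c : seq X) cs : size c = size st ->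
  col_ok st c [:: (ein e1 + d, e2); (0, e1)] cs ->
  exists A B A' B' cA cB cA' cB', fdat e1 d e2 st c A B A' B' cA cB cA' cB' /\
    cs = [:: cA ++ cB'; cA' ++ cB'].
Proof.
move=> Hs /col_ok_cons [c1 [cs1 [-> [_ [st1 [E1 [S1 H1]]]]]]].
have Hk : ein e1 <= size st by have := step_le E1; lia.
have [A [B [EA HA]]] := split_at Hk.
have [cA [cB [EcA HcA]]] : exists cA cB, c = cA ++ cB /\ size cA = ein e1 by apply: split_at; rewrite Hs.
subst st c.
have HcA' : size cA = size A by rewrite HA HcA.
have HcB : size cB = size B by move: Hs; rewrite !size_cat HcA'; lia.
move: E1 S1; rewrite -HA step_shift.
case EB: (step_or B (d, e2)) => [B'|] //= [E1]; subst st1.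
move/col_shift1 => /(_ HcA') [cB' [Ec1 SB]]; subst c1.
have HcB' : size cB' = size B' by apply: step_size HcB EB SB.
move/col_ok_cons: H1 => [c2 [cs2 [-> [_ [st2 [E2 [S2 H2]]]]]]].
move: E2; rewrite step_right; last by rewrite HA.
case EA: (step_or A (0, e1)) => [A'|] //= [E2]; subst st2.
move/col_right: S2 => /(_ HcA') []; first by rewrite HA.
move=> cA' [Ec2 SA]; subst c2.
case: cs2 H2 => // _.
by exists A, B, A', B', cA, cB, cA', cB'.
Qed.

Lemma g_far e1 d e2 : good X [:: (0, e1); (eout e1 + d, e2)] [:: (ein e1 + d, e2); (0, e1)].
Proof.
move=> st c cs s1 s2 Hs E1 E2 Hc.
have [A [B [A' [B' [cA [cB [cA' [cB' [F ->]]]]]]]]] := farL_dec Hs Hc.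
move: E1 E2; rewrite (farL_run F) (farR_run F) => -[<-] [<-]; split => //.
by exists [:: cA ++ cB'; cA' ++ cB']; split => //; apply: farR_col F.
Qed.

Lemma g_far' e1 d e2 : good X [:: (ein e1 + d, e2); (0, e1)] [:: (0, e1); (eout e1 + d, e2)].
Proof.
move=> st c cs s1 s2 Hs E1 E2 Hc.
have [A [B [A' [B' [cA [cB [cA' [cB' [F ->]]]]]]]]] := farR_dec Hs Hc.
move: E1 E2; rewrite (farL_run F) (farR_run F) => -[<-] [<-]; split => //.
by exists [:: cA' ++ cB; cA' ++ cB']; split => //; apply: farL_col F.
Qed.

Lemma In_cat2 (T : Type) (z : T) s1 s2 : List.In z s1 \/ List.In z s2 -> List.In z (s1 ++ s2).
Proof. elim: s1 => [|a s IH] /=; first by case. by case=> [[->|H]|H]; auto. Qed.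

Lemma a_far e1 d e2 : allx X [:: (0, e1); (eout e1 + d, e2)].
Proof.
move=> st c cs s1 x Hs E1 Hc Hx1 Hx2 z Hz.
have [A [B [A' [B' [cA [cB [cA' [cB' [F Ecs]]]]]]]]] := farL_dec Hs Hc.
subst cs; case: F => _ Ec _ _ _; subst c; move: Hx2 => /= Hx2.
case/In_flat_cons: Hz => Hz; last case/In_flat_cons: Hz => Hz; last by case: Hz.
- case: (In_cat Hz) => Hz'; [apply: Hx2 | apply: Hx1]; apply: In_cat2; auto.
- exact: Hx2.
Qed.

Lemma a_far' e1 d e2 : allx X [:: (ein e1 + d, e2); (0, e1)].
Proof.
move=> st c cs s1 x Hs E1 Hc Hx1 Hx2 z Hz.
have [A [B [A' [B' [cA [cB [cA' [cB' [F Ecs]]]]]]]]] := farR_dec Hs Hc.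
subst cs; case: F => _ Ec _ _ _; subst c; move: Hx2 => /= Hx2.
case/In_flat_cons: Hz => Hz; last case/In_flat_cons: Hz => Hz; last by case: Hz.
- case: (In_cat Hz) => Hz'; [apply: Hx1 | apply: Hx2]; apply: In_cat2; auto.
- exact: Hx2.
Qed.

End FAR.

Section INV.
Variable X : quandle.

Lemma lmv_all L R : lmv L R -> [/\ good X L R, good X R L, allx X L & allx X R].
Proof.
case.
- move=> e1 d e2; split; [exact: g_far | exact: g_far' | exact: a_far | exact: a_far'].
- move=> o; split; [exact: g_s1 | exact: g_s1' | exact: a_s1 | exact: a_nil].
- move=> o; split; [exact: g_s2 | exact: g_s2' | exact: a_s2 | exact: a_nil].
- move=> b; split; [exact: g_cap | exact: g_cap' | exact: a_cap | exact: a_cap'].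
- move=> o b; split; [exact: g_cup | exact: g_cup' | exact: a_cup | exact: a_cup'].
- move=> o b; split; [exact: g_r1a | exact: g_r1a' | exact: a_r1a | exact: a_nil].
- move=> o b; split; [exact: g_r1b | exact: g_r1b' | exact: a_r1b | exact: a_nil].
- move=> b; split; [exact: g_r2 | exact: g_r2' | exact: a_r2 | exact: a_nil].
- move=> b1 b2 b3 H; split; [exact: g_r3 | exact: g_r3' | exact: a_r3 | exact: a_r3'].
Qed.

Lemma move_all L R : move L R -> [/\ good X L R, good X R L, allx X L & allx X R].
Proof.
case/move_lmv => k [L0 [R0 [-> [-> H]]]].
have NE := lmv_ne H.
case: (lmv_all H) => G1 G2 A1 A2; split.
- apply: good_shift => //; by left.
- apply: good_shift => //; by right.
- exact: allx_shift.
- exact: allx_shift.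
Qed.

Lemma inC (z : X) (s1 s2 : seq X) : List.In z (s1 ++ s2) -> List.In z s1 \/ List.In z s2.
Proof. exact: In_cat. Qed.

Definition nontriv (l : seq X) := exists x y, x <> y /\ List.In x l /\ List.In y l.

Definition NC (a : seq bool) (w : word) (c0 cf : seq X) :=
  exists cs, size c0 = size a /\ col_ok a c0 w cs /\ last c0 cs = cf /\ nontriv (c0 ++ flatten cs).

Lemma in_last (c : seq X) cs z : List.In z (last c cs) -> List.In z c \/ List.In z (flatten cs).
Proof.
elim: cs c => [|c' cs IH] c /=; first by left.
case/IH => H; right; apply: In_cat2; auto.
Qed.

Lemma nt_transfer (c0 : seq X) cs1 cs2 cs2' cs3 :
  (forall x, (forall z, List.In z (last c0 cs1) -> z = x) ->
     (forall z, List.In z (last (last c0 cs1) cs2) -> z = x) ->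
     forall z, List.In z (flatten cs2) -> z = x) ->
  last (last c0 cs1) cs2' = last (last c0 cs1) cs2 ->
  nontriv (c0 ++ flatten (cs1 ++ cs2 ++ cs3)) -> nontriv (c0 ++ flatten (cs1 ++ cs2' ++ cs3)).
Proof.
move=> A El [u [v [Nuv [Hu Hv]]]].
set T := c0 ++ flatten (cs1 ++ cs2' ++ cs3).
have inT1 : forall z, List.In z (last c0 cs1) -> List.In z T.
  move=> z /in_last [H|H]; apply: In_cat2; [by left | right].
  by rewrite !flatten_cat; apply: In_cat2; left.
have inT2 : forall z, List.In z (last (last c0 cs1) cs2) -> List.In z T.
  rewrite -El => z /in_last [/inT1 //|H]; apply: In_cat2; right.
  by rewrite !flatten_cat; apply: In_cat2; right; apply: In_cat2; left.
have inT0 : forall z, List.In z (c0 ++ flatten (cs1 ++ cs2 ++ cs3)) -> List.In z T \/ List.In z (flatten cs2).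
  move=> z; rewrite !flatten_cat => /inC [H|/inC [H|/inC [H|H]]]; auto.
  + by left; apply: In_cat2; left.
  + by left; apply: In_cat2; right; rewrite !flatten_cat; apply: In_cat2; left.
  + by left; apply: In_cat2; right; rewrite !flatten_cat; apply: In_cat2; right; apply: In_cat2; right.
apply: NNPP => N.
have allT : forall p q, List.In p T -> List.In q T -> p = q.
  move=> p q Hp Hq; apply: NNPP => Npq; apply: N; by exists p, q.
case: (classic (exists t, List.In t (last c0 cs1) \/ List.In t (last (last c0 cs1) cs2))).
- case=> t Ht.
  have tT : List.In t T by case: Ht => [/inT1|/inT2].
  have At : forall z, List.In z (flatten cs2) -> z = t.
    apply: A => z Hz; [apply: allT (inT1 _ Hz) tT | apply: allT (inT2 _ Hz) tT].
  have Ut : u = t by case: (inT0 _ Hu) => [H|H]; [apply: allT H tT | apply: At].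
  have Vt : v = t by case: (inT0 _ Hv) => [H|H]; [apply: allT H tT | apply: At].
  by apply: Nuv; rewrite Ut Vt.
- move=> Nt.
  have Ax : forall x z, List.In z (flatten cs2) -> z = x.
    move=> x; apply: A => z Hz; exfalso; apply: Nt; exists z; auto.
  case: (inT0 _ Hu) => [Hu'|Hu']; last by apply: Nuv; apply: Ax.
  case: (inT0 _ Hv) => [Hv'|Hv']; last by apply: Nuv; symmetry; apply: Ax.
  by apply: Nuv; apply: allT.
Qed.

Lemma swap_NC a p L R q c0 cf b' : good X L R -> allx X L ->
  run a (p ++ R ++ q) = Some b' -> NC a (p ++ L ++ q) c0 cf -> NC a (p ++ R ++ q) c0 cf.
Proof.
move=> G A ER [cs [Hs0 [Hc [Hl Hnt]]]].
move/col_ok_cat: Hc => [cs1 [cs23 [s1 [Ecs [H1 [E1 /col_ok_cat [cs2 [cs3 [s2 [Ecs23 [H2 [E2 H3]]]]]]]]]]]].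
subst cs cs23.
move: ER; rewrite run_cat E1 /= run_cat.
case ER: (run s1 R) => [s2'|] //= _.
have Hsz : size (last c0 cs1) = size s1 := col_size H1 Hs0 E1.
have [Es [cs2' [H2' Hl2]]] := G _ _ _ _ _ Hsz E2 ER H2.
subst s2'.
exists (cs1 ++ cs2' ++ cs3); split => //; split.
  apply/col_ok_cat; exists cs1, (cs2' ++ cs3), s1; split => //; split => //; split => //.
  apply/col_ok_cat; exists cs2', cs3, s2; split => //; split => //; split => //.
  by rewrite Hl2.
split; first by rewrite !last_cat Hl2 -Hl !last_cat.
apply: nt_transfer Hl2 Hnt => x Hx1 Hx2 z Hz.
exact: (A _ _ _ _ x Hsz E2 H2 Hx1 Hx2 z Hz).
Qed.

Lemma rstep_NC a b w w' c0 cf : rstep a b w w' -> (NC a w c0 cf <-> NC a w' c0 cf).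
Proof.
case=> p [q [L [R [M [-> [-> [V1 V2]]]]]]].
case: (move_all M) => G1 G2 A1 A2; split.
- exact: swap_NC G1 A1 V2.
- exact: swap_NC G2 A2 V1.
Qed.

Lemma Equiv_NC a b w w' c0 cf : Equiv a b w w' -> (NC a w c0 cf <-> NC a w' c0 cf).
Proof.
elim=> [x y /rstep_NC //|x //|x y _ IH|x y z _ IH1 _ IH2].
- by rewrite IH.
- by rewrite IH1 IH2.
Qed.

End INV.

Lemma run_right st sr w st' : run st w = Some st' -> run (st ++ sr) w = Some (st' ++ sr).
Proof.
elim: w st => [|[k e] w IH] st; first by case=> <-.
rewrite !run_cons; case E: (step_or st (k, e)) => [s1|] // H.
by rewrite step_right ?E /=; [exact: IH | exact: step_le E].
Qed.

Lemma Equiv_valid a b w w' : Equiv a b w w' -> (valid a w b <-> valid a w' b).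
Proof.
elim=> [x y [p [q [L [R [_ [_ [_ [V1 V2]]]]]]]]|x //|x y _ IH|x y z _ IH1 _ IH2].
- by split.
- by rewrite IH.
- by rewrite IH1 IH2.
Qed.

Section MAIN.
Variable X : quandle.

Lemma col_right_w st sr (c cr : seq X) w cs : size cr = size sr -> size c = size st -> col_ok st c w cs ->
  col_ok (st ++ sr) (c ++ cr) w (map (cat^~ cr) cs).
Proof.
move=> Hr; elim: w st c cs => [|[k e] w IH] st c cs Hs.
  by case: cs.
move/col_ok_cons => [c' [cs' [-> [_ [s1 [E [Sc H]]]]]]].
have Hk := step_le E.
apply/col_ok_cons; exists (c' ++ cr), (map (cat^~ cr) cs'); split => //; split.
  by rewrite !size_cat Hs Hr.
exists (s1 ++ sr); split; first by rewrite step_right ?E.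
split; first by apply/col_right => //; exists c'.
apply: IH => //; exact: step_size Hs E Sc.
Qed.

Lemma sc_const st x st' (y : X) : step_or st x = Some st' ->
  slice_col st (map (fun _ => y) st) x (map (fun _ => y) st').
Proof.
case: x => k e E; have Hk := step_le E; move: E; rewrite /step_or; case: ifP => // _.
case: e Hk => [o||b] /= Hk.
- by case=> <-; exists y; rewrite map_cat /= map_take map_drop addn0.
- have Hd : 2 <= size (drop k st) by rewrite size_drop; lia.
  rewrite -map_drop; case E: (drop k st) Hd => [|a [|b r]] // _ /=.
  have Er : drop (k + 2) st = r by rewrite addnC -drop_drop E /= drop0.
  case: ifP => // _ [<-]; split => //; by rewrite map_cat map_take Er.
- have Hd : 2 <= size (drop k st) by rewrite size_drop; lia.
  case=> <-; apply/col_cross; rewrite -!map_drop.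
  case E: (drop k st) Hd => [|a [|a2 r]] // _ /=.
  have Er : drop (k + 2) st = r by rewrite addnC -drop_drop E /= drop0.
  rewrite !map_cat map_take Er /cross_out; case: b => /=; by rewrite qapp_idem.
Qed.

Lemma col_const st w st' (y : X) : run st w = Some st' ->
  exists cs, col_ok st (map (fun _ => y) st) w cs /\ last (map (fun _ => y) st) cs = map (fun _ => y) st'.
Proof.
elim: w st => [|x w IH] st; first by case=> <-; exists [::].
rewrite run_cons; case E: (step_or st x) => [s1|] // /IH [cs [H1 H2]].
exists (map (fun _ => y) s1 :: cs); split => //.
apply/col_ok_cons; do 2 eexists; split; first reflexivity; split; first by rewrite size_map.
exists s1; split => //; split => //; exact: sc_const.
Qed.

Lemma unknot_NC (c0 cf : seq X) : NC [::] unknot c0 cf -> False.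
Proof.
case=> cs [Hs [Hc [_ [u [v [Nuv [Hu Hv]]]]]]].
case: c0 Hs Hc Hu Hv => // _ Hc Hu Hv.
eapply colE in Hc; last exact: st_cup0.
case: Hc => [c1 [cs1 [Ecs [_ [/sc_cup0 [y Ec1] Hc]]]]]; subst cs c1.
eapply colE in Hc; last by rewrite st_cap0.
case: Hc => [c2 [cs2 [Ecs [_ [/sc_cap0 [_ Ec2] Hc]]]]]; subst cs1 c2.
case: cs2 Hc => // _ in Hu Hv *.
apply: Nuv; move: Hu Hv => /= [<-|[<-|[]]] [<-|[<-|[]]] //.
Qed.

Lemma in_map_cat_r (l : seq X) cs z : List.In z (flatten cs) -> List.In z (flatten (map (cat^~ l) cs)).
Proof.
elim: cs => [|c cs IH] //= /inC [H|H]; apply: In_cat2; [left; apply: In_cat2; auto | right; auto].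
Qed.
Lemma in_map_cat_l (l : seq X) cs z : List.In z (flatten cs) -> List.In z (flatten (map (cat l) cs)).
Proof.
elim: cs => [|c cs IH] //= /inC [H|H]; apply: In_cat2; [left; apply: In_cat2; auto | right; auto].
Qed.

Lemma closure_NC e t s (y : X) : valid [:: e] t [:: e] -> valid [:: ~~ e] s [:: ~~ e] ->
  NC [:: e] t [:: y] [:: y] -> NC [::] (Defs.closure e t s) [::] ([::] : seq X).
Proof.
move=> Vt Vs [cst [_ [Ht [Hl Hnt]]]].
have [css [Hs Hls]] := col_const y Vs.
have Ht' := col_right_w (st := [:: e]) (c := [:: y]) (sr := [:: ~~ e]) (cr := [:: y]) (erefl 1) (erefl 1) Ht.
have Rt' := run_right [:: ~~ e] Vt.
have Hs' : col_ok ([:: e] ++ [:: ~~ e]) ([:: y] ++ [:: y]) (shift (size [:: e]) s) (map (cat [:: y]) css).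
  by apply/col_shift => //; exists css.
have Rs' := run_shift [:: e] [:: ~~ e] s; rewrite Vs /= in Rs'.
exists ([:: y; y] :: (map (cat^~ [:: y]) cst ++ (map (cat [:: y]) css ++ [:: [::]]))).
split => //; split.
- apply/colE; first exact: st_cup0.
  exists [:: y; y], (map (cat^~ [:: y]) cst ++ (map (cat [:: y]) css ++ [:: [::]])); split => //; split => //.
  split; first by apply/sc_cup0; exists y.
  apply/col_ok_cat; exists (map (cat^~ [:: y]) cst), (map (cat [:: y]) css ++ [:: [::]]), [:: e; ~~ e].
  split => //; split => //; split => //.
  rewrite (last_map (cat^~ [:: y]) cst [:: y]) Hl.
  apply/col_ok_cat; exists (map (cat [:: y]) css), [:: [::]], [:: e; ~~ e].
  split => //; split => //; split => //.
  rewrite (last_map (cat [:: y]) css [:: y]) Hls.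
  apply/colE; first by rewrite /=; destruct e.
  exists [::], [::]; split => //; split => //; split => //.
- split; first by rewrite /= !last_cat.
  case: Hnt => u [v [Nuv [Hu Hv]]]; exists u, v; split => //.
  have K : forall z, List.In z ([:: y] ++ flatten cst) ->
      List.In z ([::] ++ flatten ([:: y; y] :: (map (cat^~ [:: y]) cst ++ (map (cat [:: y]) css ++ [:: [::]])))).
    move=> z /inC [H|H].
      case: H => [<-|[]]; apply: In_cat2; right; apply: In_cat2; left; by left.
    apply: In_cat2; right.
    change (List.In z ([:: y; y] ++ flatten (map (cat^~ [:: y]) cst ++ (map (cat [:: y]) css ++ [:: [::]])))).
    apply: In_cat2; right; rewrite flatten_cat; apply: In_cat2; left.
    exact: in_map_cat_r.
  split; exact: K.
Qed.

End MAIN.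

Lemma obind_Some (A B : Type) (f : A -> option B) x : obind f (Some x) = f x.
Proof. by []. Qed.
Lemma omap_Some (A B : Type) (f : A -> B) x : omap f (Some x) = Some (f x).
Proof. by []. Qed.

Section CUT.
Variable X : quandle.

Lemma cut_valid D j o st : valid [::] D [::] -> run [::] (take j D) = Some (o :: st) ->
  valid [:: ~~ o] (cut D j) [:: ~~ o].
Proof.
move=> V R.
have R2 : run (o :: st) (drop j D) = Some [::].
  by move: V; rewrite /valid -{1}(cat_take_drop j D) run_cat R.
rewrite /valid /cut /level_or R run_cat.
have := run_shift [:: ~~ o] [::] (take j D); rewrite R => E1; rewrite E1 ?omap_Some obind_Some.
have S1 : step_or (~~ o :: o :: st) (0, Cap) = Some st by rewrite st_cap0; destruct o.
rewrite (run_some _ S1) (run_some _ (st_cup0 _ _)) negbK.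
by have := run_shift [:: ~~ o] (o :: st) (drop j D); rewrite R2 => ->.
Qed.

Lemma cut_NC D j o st : valid [::] D [::] -> NC [::] D [::] ([::] : seq X) ->
  run [::] (take j D) = Some (o :: st) ->
  exists y : X, NC [:: ~~ o] (cut D j) [:: y] [:: y].
Proof.
move=> V [cs [_ [Hc [Hl Hnt]]]] R.
have R2 : run (o :: st) (drop j D) = Some [::].
  by move: V; rewrite /valid -{1}(cat_take_drop j D) run_cat R.
move: Hc; rewrite -{1}(cat_take_drop j D) => /col_ok_cat [cs1 [cs2 [s1 [Ecs [H1 [R1 H2]]]]]].
rewrite R in R1; case: R1 => Es1; subst s1 cs.
have Hsz : size (last [::] cs1) = size (o :: st) := col_size H1 (erefl 0) R.
case Ecj: (last [::] cs1) Hsz => [|y c'] // [Hsz].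
rewrite Ecj in H2.
have Hl2 : last (y :: c') cs2 = [::] by rewrite -Ecj -last_cat.
exists y.
have H1' : col_ok ([:: ~~ o] ++ [::]) ([:: y] ++ [::]) (shift (size [:: ~~ o]) (take j D)) (map (cat [:: y]) cs1).
  by apply/col_shift => //; exists cs1.
have R1' := run_shift [:: ~~ o] [::] (take j D); rewrite R /= in R1'.
have H2' : col_ok ([:: ~~ o] ++ (o :: st)) ([:: y] ++ (y :: c')) (shift (size [:: ~~ o]) (drop j D)) (map (cat [:: y]) cs2).
  by apply/col_shift => //; exists cs2.
exists (map (cat [:: y]) cs1 ++ [:: c'; y :: y :: c'] ++ map (cat [:: y]) cs2).
split => //; split.
- rewrite /cut /level_or R /=.
  apply/col_ok_cat; exists (map (cat [:: y]) cs1), ([:: c'; y :: y :: c'] ++ map (cat [:: y]) cs2), (~~ o :: o :: st).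
  split => //; split => //; split => //.
  rewrite (last_map (cat [:: y]) cs1 [::]) Ecj.
  apply/colE; first by rewrite st_cap0; destruct o.
  exists c', ((y :: y :: c') :: map (cat [:: y]) cs2); split => //; split; first by rewrite /= Hsz.
  split => //.
  apply/colE; first exact: st_cup0.
  exists (y :: y :: c'), (map (cat [:: y]) cs2); split => //; split => //.
  split; first by apply/sc_cup0; exists y.
  by rewrite negbK.
- split.
  + rewrite !last_cat /= (last_map (cat [:: y]) cs2 (y :: c')) Hl2.
    by [].
  + case: Hnt => u [v [Nuv [Hu Hv]]]; exists u, v; split => //.
    have K : forall z, List.In z ([::] ++ flatten (cs1 ++ cs2)) ->
       List.In z ([:: y] ++ flatten (map (cat [:: y]) cs1 ++ [:: c'; y :: y :: c'] ++ map (cat [:: y]) cs2)).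
      move=> z; rewrite cat0s flatten_cat => /inC [H|H]; apply: In_cat2; right; rewrite !flatten_cat.
        by apply: In_cat2; left; apply: in_map_cat_l.
      by apply: In_cat2; right; apply: In_cat2; right; apply: in_map_cat_l.
    split; exact: K.
Qed.

End CUT.

Theorem mainTheorem2 (X : quandle) (D : word) :
  knot_diagram D ->
  (exists D', Equiv [::] [::] D D' /\ nontriv_colored X D') ->
  forall j : nat, (exists o st, run [::] (take j D) = Some (o :: st)) ->
  persistent (~~ level_or D j) (cut D j).
Proof.
move=> [VD _] [D' [EqD [cs' [Hc' [u [v [Nuv [Hu Hv]]]]]]]] j [o [st Hj]].
have NC' : NC [::] D' [::] (last [::] cs').
  by exists cs'; split => //; split => //; split => //; exists u, v.
move/(Equiv_NC _ _ EqD): NC' => NCD.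
have Ecf : last [::] cs' = [::].
  case: NCD => cs [_ [Hc [Hl _]]].
  have := col_size Hc (erefl 0) VD; rewrite Hl.
  by case: (last [::] cs').
rewrite Ecf in NCD.
have [y NCc] := cut_NC VD NCD Hj.
have Vc := cut_valid VD Hj.
have Elo : level_or D j = o by rewrite /level_or Hj.
rewrite Elo => t' Et' s [Vs _] Eu.
have NCt := proj1 (Equiv_NC _ _ Et') NCc.
have Vt := proj1 (Equiv_valid Et') Vc.
have NCcl := closure_NC Vt Vs NCt.
have := proj1 (Equiv_NC _ _ Eu) NCcl.
exact: unknot_NC.
Qed.
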